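(* Let $(a_n(q))_{n\ge1}$ be a sequence in $\mathbb{Z}[q]$ and $N\ge1$. Suppose that $\prod_{d\mid N,\,\mu(d)=1}a_{N/d}(q^d)\equiv\prod_{d\mid N,\,\mu(d)=-1}a_{N/d}(q^d)\pmod{[N]_q}$ and that $\sum_{d\mid n}\mu(d)a_{n/d}(q^d)\equiv0\pmod{[n]_q}$ for all $1\le n<N$. Then $[N]_q$ divides $\left(\sum_{d\mid N}\mu(d)\,a_{N/d}(q^d)\right)\cdot\prod_{d\mid N,\ d>1,\ \mu(d)=1}a_{N/d}(q^d)$ in $\mathbb{Z}[q]$.
   Context: $\mu$ is the Möbius function and $[n]_q=1+q+\dots+q^{n-1}$; polynomial congruences modulo $[n]_q$ mean divisibility of the difference by $[n]_q$ in $\mathbb{Z}[q]$. *)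

(* Defs.v *)
From mathcomp Require Import all_boot all_order all_algebra.
Set Implicit Arguments. Unset Strict Implicit. Unset Printing Implicit Defensive.
Import GRing.Theory.
Local Open Scope ring_scope.

Definition mobius (n : nat) : int :=
  if [forall p : 'I_n.+1, (prime p) ==> ~~ (p * p %| n)%N]
  then (-1) ^+ size (primes n) else 0.

Definition qint (n : nat) : {poly int} := \sum_(i < n) 'X^i.

Definition subst_pow (p : {poly int}) (d : nat) : {poly int} := p \Po 'X^d.

Definition zdvd (p r : {poly int}) : Prop := exists c : {poly int}, r = c * p.

(* Main.v *)
Require Import Defs.
From mathcomp Require Import all_boot all_order all_algebra all_field.
Import GRing.Theory Num.Theory.
Local Open Scope ring_scope.
Definition ev (z : algC) (p : {poly int}) : algC := (map_poly intr p).[z].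
Lemma evM z p q : ev z (p * q) = ev z p * ev z q.
Proof. by rewrite /ev rmorphM hornerM. Qed.
Lemma evB z p q : ev z (p - q) = ev z p - ev z q.
Proof. by rewrite /ev rmorphB hornerD hornerN. Qed.
Lemma ev_sum z (r : seq nat) (P : pred nat) F : ev z (\sum_(i <- r | P i) F i) = \sum_(i <- r | P i) ev z (F i).
Proof. by rewrite /ev rmorph_sum horner_sum. Qed.
Lemma ev_prod z (r : seq nat) (P : pred nat) F : ev z (\prod_(i <- r | P i) F i) = \prod_(i <- r | P i) ev z (F i).
Proof. by rewrite /ev rmorph_prod horner_prod. Qed.
Lemma ev_int z (c : int) : ev z c%:~R = c%:~R.
Proof. by rewrite /ev rmorph_int horner_int. Qed.
Lemma ev_subst z p d : ev z (subst_pow p d) = ev (z ^+ d) p.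
Proof. by rewrite /ev /subst_pow map_comp_poly horner_comp map_polyXn hornerXn. Qed.
Lemma ev_dvd z Q P : zdvd Q P -> ev z Q = 0 -> ev z P = 0.
Proof. by move=> [c ->] H; rewrite evM H mulr0. Qed.
Lemma qint_mul n : qint n * ('X - 1) = 'X^n - 1.
Proof.
elim: n => [|n IH]; first by rewrite /qint big_ord0 mul0r expr0 subrr.
rewrite /qint big_ord_recr /= mulrDl -/(qint n) IH exprS mulrBr mulr1.
by rewrite addrC addrA subrK mulrC.
Qed.
Lemma ev_qint w n : w ^+ n = 1 -> w != 1 -> ev w (qint n) = 0.
Proof.
move=> wn w1.
have: ev w (qint n * ('X - 1)) = 0.
  by rewrite qint_mul /ev rmorphB rmorph1 /= map_polyXn !hornerE wn subrr.
rewrite evM {2}/ev rmorphB rmorph1 /= map_polyX !hornerE => /eqP.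
by rewrite mulf_eq0 subr_eq0 (negbTE w1) orbF => /eqP.
Qed.
Lemma qint_monic N : (0 < N)%N -> qint N \is monic.
Proof.
move=> N0.
have -> : qint N = \poly_(i < N) 1.
  rewrite poly_def /qint. apply: eq_bigr => i _. by rewrite scale1r.
by rewrite monicE lead_coef_poly.
Qed.
Lemma transfer (Q R : {poly int}) (c : {poly algC}) : Q \is monic ->
  map_poly intr R = c * map_poly intr Q -> zdvd Q R.
Proof.
move=> mQ HR; rewrite /zdvd; apply/(Pdiv.IdomainMonic.dvdpP mQ).
rewrite /dvdp; apply/negPn/negP => r0.
have Q0 : Q != 0 by apply: monic_neq0.
have := ltn_modpN0 R Q0.
have inj : injective (intr : int -> algC) by apply: intr_inj.
have E := Pdiv.IdomainMonic.divp_eq mQ R.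
have Hr : map_poly (intr : int -> algC) (R %% Q) = (c - map_poly intr (R %/ Q)) * map_poly (intr : int -> algC) Q.
  have E' := congr1 (map_poly (intr : int -> algC)) E.
  rewrite rmorphD rmorphM /= HR in E'.
  by rewrite mulrBl E' addrC addKr.
have mr0 : map_poly (intr : int -> algC) (R %% Q) != 0 by rewrite map_poly_eq0_id0 ?lead_coef_eq0 ?intr_eq0 ?lead_coef_eq0.
have D : map_poly (intr : int -> algC) Q %| map_poly (intr : int -> algC) (R %% Q).
  by rewrite Hr dvdp_mull.
have := dvdp_leq mr0 D.
rewrite !size_map_inj_poly // => H1 H2.
by have := leq_trans H2 H1; rewrite ltnn.
Qed.
Lemma root_crit N (R : {poly int}) : (0 < N)%N ->
  (forall z : algC, z ^+ N = 1 -> z != 1 -> ev z R = 0) -> zdvd (qint N) R.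
Proof.
move=> N0 H.
have [w pw] := C_prim_root_exists N0.
pose rs := [seq w ^+ i | i <- iota 1 N.-1].
have ne1 : forall i, (0 < i < N)%N -> w ^+ i != 1.
  move=> i /andP[i0 iN]; rewrite -(expr0 w) (eq_prim_root_expr pw) !modn_small //.
  by rewrite -lt0n.
have [c Hc] : exists c, map_poly (intr : int -> algC) R = c * \prod_(x <- rs) ('X - x%:P).
  apply: uniq_roots_prod_XsubC.
    apply/allP => x /mapP[i]; rewrite mem_iota => /andP[i1 iN] ->.
    rewrite /root -/(ev _ R) H ?ne1 //.
      by rewrite exprAC (prim_expr_order pw) expr1n.
    by rewrite i1 -(prednK N0) -ltnS -add1n.
  rewrite uniq_rootsE map_inj_in_uniq ?iota_uniq // => i j.
  rewrite !mem_iota => /andP[_ iN] /andP[_ jN] /eqP.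
  rewrite (eq_prim_root_expr pw) !modn_small //; first by move/eqP.
    by move: jN; rewrite add1n prednK.
  by move: iN; rewrite add1n prednK.
apply: (@transfer _ _ c (qint_monic _ N0)); rewrite Hc; congr (_ * _).
apply: (@mulIf _ ('X - 1)); first by rewrite polyXsubC_eq0.
have M : map_poly (intr : int -> algC) (qint N) * ('X - 1) = 'X^N - 1.
  have M := congr1 (map_poly (intr : int -> algC)) (qint_mul N).
  by rewrite rmorphM !rmorphB !rmorph1 /= map_polyX map_polyXn in M.
rewrite M -(factor_Xn_sub_1 pw) big_ltn //  expr0 mulrC; congr (_ * _).
by rewrite /rs big_map /index_iota subn1.
Qed.
Lemma sqfreeP n : (0 < n)%N ->
  reflect (forall q, prime q -> ~~ (q * q %| n)%N)
          [forall q : 'I_n.+1, prime q ==> ~~ (q * q %| n)%N].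
Proof.
move=> n0; apply: (iffP forallP) => [H q pq | H q].
  apply/negP => D.
  have qn : (q < n.+1)%N.
    rewrite ltnS; apply: leq_trans (dvdn_leq n0 D).
    by rewrite leq_pmulr // prime_gt0.
  by move: (H (Ordinal qn)); rewrite /= pq /= D.
by apply/implyP => pq; apply: H.
Qed.
Lemma mob_sq g p : prime p -> (0 < g)%N -> (p * p %| g)%N -> mobius g = 0.
Proof.
move=> pp g0 D; rewrite /mobius; case: sqfreeP => // H.
by move: (H p pp); rewrite D.
Qed.
Lemma mob_mulp h p : prime p -> (0 < h)%N -> ~~ (p %| h)%N -> mobius (h * p) = - mobius h.
Proof.
move=> pp h0 ph.
have hp0 : (0 < h * p)%N by rewrite muln_gt0 h0 prime_gt0.
have Esq : [forall q : 'I_(h * p).+1, prime q ==> ~~ (q * q %| h * p)%N]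
         = [forall q : 'I_h.+1, prime q ==> ~~ (q * q %| h)%N].
  apply/sqfreeP/sqfreeP => // H q pq.
    case: (eqVneq q p) => [-> | qp].
      by apply/negP => D; move: ph; rewrite (dvdn_trans _ D) // dvdn_mulr.
    have := H q pq; rewrite Gauss_dvdl // coprimeMl andbb prime_coprime // dvdn_prime2 //.
  case: (eqVneq q p) => [-> | qp].
    by rewrite dvdn_pmul2r ?prime_gt0.
  have := H q pq; rewrite Gauss_dvdl // coprimeMl andbb prime_coprime // dvdn_prime2 //.
have Ep : perm_eq (primes (h * p)) (p :: primes h).
  apply: uniq_perm; first exact: primes_uniq.
    by rewrite /= primes_uniq mem_primes pp h0 (negbTE ph).
  move=> x; rewrite in_cons !mem_primes hp0 h0 /=.
  case: (eqVneq x p) => [-> | xp] /=; first by rewrite pp dvdn_mull.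
  case px: (prime x) => //=; rewrite Euclid_dvdM // (dvdn_prime2 px pp).
  by rewrite (negbTE xp) orbF.
rewrite /mobius Esq (perm_size Ep) /=.
by case: ifP => _; rewrite ?oppr0 // exprS mulN1r.
Qed.
Lemma mob1 : mobius 1 = 1.
Proof.
rewrite /mobius; case: sqfreeP => // H; exfalso; apply: H.
move=> q pq; apply/negP => D.
have := dvdn_leq (isT : (0 < 1)%N) D; rewrite leqNgt.
have q1 := prime_gt1 pq.
by rewrite (leq_trans q1) // leq_pmulr // ltnW.
Qed.
Lemma mobp p : prime p -> mobius p = -1.
Proof. by move=> pp; rewrite -(mul1n p) mob_mulp // ?mob1 // dvdn1; case: eqP pp => // ->. Qed.
Lemma memd n d : (0 < n)%N -> (d \in divisors n) = (d %| n)%N.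
Proof. by move=> n0; rewrite -dvdn_divisors. Qed.

Lemma filt_eq n p : prime p -> (0 < n)%N -> (p %| n)%N ->
  perm_eq [seq h <- divisors (n %/ p) | ~~ (p %| h)%N] [seq h <- divisors n | ~~ (p %| h)%N].
Proof.
move=> pp n0 pn.
have np0 : (0 < n %/ p)%N by rewrite divn_gt0 ?prime_gt0 // dvdn_leq.
apply: uniq_perm; rewrite ?filter_uniq ?divisors_uniq // => h.
rewrite !mem_filter !memd //; case ph: (p %| h)%N => //=.
rewrite dvdn_divRL // Gauss_dvd ?pn ?andbT //.
by rewrite coprime_sym prime_coprime // ph.
Qed.

Lemma split_sum (n p : nat) (F : nat -> algC) : prime p -> (0 < n)%N -> (p %| n)%N ->
  \sum_(g <- divisors n) (mobius g)%:~R * F g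
  = \sum_(h <- divisors n | ~~ (p %| h)%N) (mobius h)%:~R * (F h - F (h * p)%N).
Proof.
move=> pp n0 pn.
have p0 := prime_gt0 pp.
have np0 : (0 < n %/ p)%N by rewrite divn_gt0 ?prime_gt0 // dvdn_leq.
have Eperm : perm_eq (divisors n)
   ([seq h <- divisors n | ~~ (p %| h)%N] ++ map (fun h => h * p)%N (divisors (n %/ p))).
  apply: uniq_perm; first exact: divisors_uniq.
    rewrite cat_uniq filter_uniq ?divisors_uniq //= map_inj_in_uniq ?divisors_uniq ?andbT.
      apply/hasPn => x /mapP[h _ ->]; rewrite mem_filter dvdn_mull //.
    by move=> x y _ _ /eqP; rewrite eqn_pmul2r // => /eqP.
  move=> g; rewrite mem_cat mem_filter memd //.
  case pg: (p %| g)%N => /=.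
    apply/idP/mapP => [gn | [h hd ->]].
      exists (g %/ p)%N; last by rewrite divnK.
      by rewrite memd // dvdn_divRL // divnK.
    by move: hd; rewrite memd // dvdn_divRL.
  apply/idP/orP => [-> // | [//|/mapP[h _ gh]]]; first by left.
  by move: pg; rewrite gh dvdn_mull.
rewrite (perm_big _ Eperm) big_cat /= big_filter big_map.
rewrite (eq_big_seq (fun h => if ~~ (p %| h)%N then - ((mobius h)%:~R * F (h * p)%N) else 0)); last first.
  move=> h; rewrite memd // => hd; have h0 : (0 < h)%N by apply: dvdn_gt0 np0 _.
  case: ifP => ph.
    by rewrite mob_mulp // rmorphN mulNr.
  by rewrite (@mob_sq _ p) ?mul0r ?muln_gt0 ?h0 ?p0 // dvdn_pmul2r // (negbFE ph).
rewrite -big_mkcond.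
have E2 : forall G : nat -> algC, \sum_(i <- divisors (n %/ p) | ~~ (p %| i)%N) G i = \sum_(i <- divisors n | ~~ (p %| i)%N) G i.
  by move=> G; rewrite -[LHS]big_filter -[RHS]big_filter; apply: perm_big; apply: filt_eq.
rewrite E2.
under [RHS]eq_bigr do rewrite mulrBr.
by rewrite big_split.
Qed.

Definition HBprop (N p : nat) (B : nat -> algC) :=
  forall e, (e %| N)%N -> (1 < e)%N -> ~~ (p %| e)%N ->
    \sum_(g <- divisors (N %/ e)%N) (mobius g)%:~R * B (e * g)%N = 0.

Lemma keyB N p B : (0 < N)%N -> prime p -> (p %| N)%N -> HBprop N p B ->
  forall d, (d %| N)%N -> (1 < d)%N -> ~~ (p %| d)%N -> B d = B (d * p)%N.
Proof.
move=> N0 pp pN HB.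
suff H : forall k d, (N - d < k)%N -> (d %| N)%N -> (1 < d)%N -> ~~ (p %| d)%N -> B d = B (d * p)%N.
  by move=> d; apply: (H (N - d).+1).
elim=> [//|k IH] d Hk dN d1 pd.
have d0 : (0 < d)%N by apply: ltnW.
have Nd0 : (0 < N %/ d)%N by rewrite divn_gt0 // dvdn_leq.
have pNd : (p %| N %/ d)%N.
  by rewrite dvdn_divRL // Gauss_dvd ?pN ?dN // prime_coprime.
have := HB d dN d1 pd.
rewrite (@split_sum _ _ (fun g => B (d * g)%N) pp Nd0 pNd).
rewrite big_mkcond (bigD1_seq 1) ?divisor1 ?divisors_uniq //=.
rewrite big1_seq; last first.
  move=> i /andP[i1 iN]; case: ifP => // pi.
  move: iN; rewrite memd // dvdn_divRL // => idN.
  have i0 : (0 < i)%N by apply: dvdn_gt0 N0 (dvdn_trans (dvdn_mulr _ _) idN).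
  have di : (d < d * i)%N by rewrite -{1}(muln1 d) ltn_pmul2l // ltn_neqAle eq_sym i1.
  rewrite mulnA (IH (d * i)%N) ?subrr ?mulr0 //.
  - by apply: leq_trans _ (_ : N - d <= k)%N; [rewrite ltn_sub2l // ; apply: leq_trans di _; apply: dvdn_leq; rewrite // mulnC| ].
  - by rewrite mulnC.
  - by apply: ltn_trans di.
  - by rewrite Euclid_dvdM // negb_or pd pi.
rewrite dvdn1 (gtn_eqF (prime_gt1 pp)) /= mob1 rmorph1 mul1r addr0 muln1 mul1n.
by move/eqP; rewrite subr_eq0 => /eqP.
Qed.
Lemma sumC N p B : (0 < N)%N -> prime p -> (p %| N)%N -> HBprop N p B ->
  \sum_(d <- divisors N) (mobius d)%:~R * B d = B 1%N - B p.
Proof.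
move=> N0 pp pN HB.
rewrite (@split_sum _ _ B pp N0 pN).
rewrite big_mkcond (bigD1_seq 1) ?divisor1 ?divisors_uniq //=.
rewrite big1_seq; last first.
  move=> i /andP[i1 iN]; case: ifP => // pi.
  move: iN; rewrite memd // => iN.
  have i0 : (0 < i)%N by apply: dvdn_gt0 N0 iN.
  by rewrite (@keyB N p B) ?subrr ?mulr0 // ltn_neqAle eq_sym i1.
by rewrite dvdn1 (gtn_eqF (prime_gt1 pp)) /= mob1 rmorph1 mul1r addr0 mul1n.
Qed.

Lemma prodsplit1 N (G : nat -> algC) : (0 < N)%N ->
  \prod_(d <- divisors N | mobius d == 1) G d
  = G 1%N * \prod_(d <- divisors N | (1 < d)%N && (mobius d == 1)) G d.
Proof.
move=> N0.
rewrite big_mkcond (bigD1_seq 1) ?divisor1 ?divisors_uniq //= mob1 eqxx.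
congr (_ * _); rewrite [RHS]big_mkcond [LHS]big_mkcond; apply: eq_big_seq => i.
rewrite memd // => iN; have i0 : (0 < i)%N by apply: dvdn_gt0 N0 iN.
by rewrite ltn_neqAle i0 andbT eq_sym; case: eqP.
Qed.

Definition sig p d := if (p %| d)%N then (d %/ p)%N else (d * p)%N.

Lemma sig_props N p d : (0 < N)%N -> prime p -> (p %| N)%N -> (d %| N)%N -> mobius d != 0 ->
  [/\ (sig p d %| N)%N, mobius (sig p d) = - mobius d & sig p (sig p d) = d].
Proof.
move=> N0 pp pN dN md.
have d0 : (0 < d)%N by apply: dvdn_gt0 N0 dN.
have p0 := prime_gt0 pp.
rewrite /sig; case: ifP => pd.
  have de : d = (d %/ p * p)%N by rewrite divnK.
  have pe : ~~ (p %| d %/ p)%N.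
    apply/negP => pe; move: md; rewrite (@mob_sq d p) ?eqxx //.
    by rewrite {1}de dvdn_pmul2r.
  have e0 : (0 < d %/ p)%N by rewrite divn_gt0 // dvdn_leq.
  rewrite (negbTE pe); split.
  - exact: (dvdn_trans (dvdn_div pd) dN).
  - by rewrite {2}de mob_mulp // opprK.
  - by rewrite -de.
have dpN : (d * p %| N)%N by rewrite Gauss_dvd ?dN ?pN // coprime_sym prime_coprime // pd.
rewrite dvdn_mull ?dvdnn // mulnK //; split=> //.
by rewrite mob_mulp // pd.
Qed.
Lemma prod_neg N p (G : nat -> algC) : (0 < N)%N -> prime p -> (p %| N)%N ->
  \prod_(d <- divisors N | mobius d == -1) G d
  = \prod_(d <- divisors N | mobius d == 1) G (sig p d).
Proof.
move=> N0 pp pN.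
have Hp : perm_eq [seq sig p d | d <- [seq d <- divisors N | mobius d == 1]]
                  [seq d <- divisors N | mobius d == -1].
  apply: uniq_perm.
  - rewrite map_inj_in_uniq ?filter_uniq ?divisors_uniq // => x y.
    rewrite !mem_filter !memd // => /andP[/eqP mx xN] /andP[/eqP my yN] E.
    have [_ _ sx] := @sig_props N p x N0 pp pN xN ltac:(by rewrite mx).
    have [_ _ sy] := @sig_props N p y N0 pp pN yN ltac:(by rewrite my).
    by rewrite -sx E sy.
  - by rewrite filter_uniq ?divisors_uniq.
  move=> x; rewrite mem_filter memd //; apply/mapP/andP.
    case=> d; rewrite mem_filter memd // => /andP[/eqP md dN] ->.
    have [s1 s2 _] := @sig_props N p d N0 pp pN dN ltac:(by rewrite md).
    by rewrite s2 md.
  case=> /eqP mx xN.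
  have [s1 s2 s3] := @sig_props N p x N0 pp pN xN ltac:(by rewrite mx).
  exists (sig p x); last by rewrite s3.
  by rewrite mem_filter memd // s1 s2 mx opprK eqxx.
by rewrite -[LHS]big_filter -(perm_big _ Hp) big_map big_filter.
Qed.

Lemma core N p B : (0 < N)%N -> prime p -> (p %| N)%N -> HBprop N p B ->
  \prod_(d <- divisors N | mobius d == 1) B d - \prod_(d <- divisors N | mobius d == -1) B d
  = (\sum_(d <- divisors N) (mobius d)%:~R * B d)
    * \prod_(d <- divisors N | (1 < d)%N && (mobius d == 1)) B d.
Proof.
move=> N0 pp pN HB.
rewrite (@prod_neg N p) // !prodsplit1 // (@sumC N p) //.
have -> : sig p 1 = p by rewrite /sig dvdn1 (gtn_eqF (prime_gt1 pp)) mul1n.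
rewrite mulrBl; congr (_ - _ * _).
rewrite [RHS]big_mkcond [LHS]big_mkcond; apply: eq_big_seq => d.
rewrite memd // => dN; case: ifP => // /andP[d1 /eqP md].
have d0 : (0 < d)%N by apply: ltnW.
rewrite /sig; case: ifP => pd; last by rewrite -(@keyB N p B) // pd.
have de : d = (d %/ p * p)%N by rewrite divnK.
have pe : ~~ (p %| d %/ p)%N.
  apply/negP => pe; move: md; rewrite (@mob_sq d p) //.
  by rewrite {1}de dvdn_pmul2r ?prime_gt0.
have e0 : (0 < d %/ p)%N by rewrite divn_gt0 ?prime_gt0 // dvdn_leq.
have e1 : (1 < d %/ p)%N.
  rewrite ltn_neqAle e0 andbT; apply/eqP => e1.
  by move: md; rewrite de -e1 mul1n mobp.
rewrite [in RHS]de (@keyB N p B) //.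
exact: (dvdn_trans (dvdn_div pd) dN).
Qed.
Theorem lemma3 (a : nat -> {poly int}) (N : nat) (HN : (1 <= N)%N)
  (Hcong : zdvd (qint N)
     (\prod_(d <- divisors N | mobius d == 1) subst_pow (a (N %/ d)%N) d
      - \prod_(d <- divisors N | mobius d == -1) subst_pow (a (N %/ d)%N) d))
  (Hprev : forall n : nat, (1 <= n)%N -> (n < N)%N ->
     zdvd (qint n) (\sum_(d <- divisors n) (mobius d)%:~R * subst_pow (a (n %/ d)%N) d)) :
  zdvd (qint N)
    ((\sum_(d <- divisors N) (mobius d)%:~R * subst_pow (a (N %/ d)%N) d)
    * \prod_(d <- divisors N | (1 < d)%N && (mobius d == 1))
        subst_pow (a (N %/ d)%N) d).
Proof.
apply: (@root_crit N _ HN) => z zN z1.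
have [m pm mN] := prim_order_exists HN zN.
have m1 : (1 < m)%N.
  rewrite ltn_neqAle (prim_order_gt0 pm) andbT; apply/eqP => m1.
  by move: z1; rewrite -(prim_expr_order pm) -m1 expr1 eqxx.
pose p := pdiv m.
have pp : prime p by apply: pdiv_prime.
have pN : (p %| N)%N by apply: dvdn_trans (pdiv_dvd m) mN.
have zp : forall e, z ^+ e = 1 -> (p %| e)%N.
  move=> e ze; apply: dvdn_trans (pdiv_dvd m) _.
  by rewrite (prim_order_dvd pm) ze.
pose B k := ev (z ^+ k) (a (N %/ k)%N).
have HB : HBprop N p B.
  move=> e eN e1 pe.
  have e0 : (0 < e)%N by apply: ltnW.
  have n1 : (1 <= N %/ e)%N by rewrite divn_gt0 // dvdn_leq.
  have nN : (N %/ e < N)%N by apply: ltn_Pdiv.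
  have := @ev_dvd (z ^+ e) _ _ (Hprev _ n1 nN).
  rewrite ev_qint; last 2 first.
  - by rewrite -exprM mulnC divnK.
  - by apply/negP => /eqP /zp; rewrite (negbTE pe).
  move=> /(_ erefl); rewrite ev_sum => H; rewrite -[RHS]H; apply: eq_bigr => g _.
  by rewrite evM ev_int ev_subst /B -exprM divnMA.
have := @ev_dvd z _ _ Hcong; rewrite ev_qint // => /(_ erefl).
rewrite evB !ev_prod.
under eq_bigr do rewrite ev_subst.
under [X in _ - X = _]eq_bigr do rewrite ev_subst.
rewrite -/B.
rewrite evM ev_sum ev_prod => H.
have := @core N p B HN pp pN HB; rewrite /B H => /esym E.
rewrite -[RHS]E; congr (_ * _).
  by apply: eq_bigr => i _; rewrite evM ev_int ev_subst.
by apply: eq_bigr => i _; rewrite ev_subst.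
Qed.
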